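(* Each of the following collections of team model properties is forgetting: (1) the collection of all bisimulation invariant, non-empty, downward closed and union closed team properties; (2) the collection of all bisimulation invariant, non-empty, downward closed team properties; (3) the collection of all bisimulation invariant, non-empty, union closed team properties.
   Context: Fix a set $Prop$ of letters. Kripke models $M=(W,R,V)$, $V:W\to\mathcal P(Prop)$; team models $(M,X)$, $X\subseteq W$. A team (model) property is a class $\mathcal C$ of team models. For a set $\mathcal P$ of letters, $(M,w)\rightleftharpoons_{\mathcal P}(N,v)$: some relation containing $(w,v)$ has all pairs agreeing on letters of $\mathcal P$ and satisfying forth and back conditions for the accessibility relations; $(M,X)\rightleftharpoons_{\mathcal P}(N,Y)$: each $x\in X$ is $\mathcal P$-bisimilar to some $y\in Y$ and each $y\in Y$ to some $x\in X$. $\mathcal C$ is bisimulation invariant if $(M,X)\in\mathcal C$ and $(M,X)\rightleftharpoons_{Prop}(N,Y)$ imply $(N,Y)\in\mathcal C$; non-empty if $\mathcal C\neq\emptyset$; downward closed if $(M,X)\in\mathcal C$ and $Y\subseteq X$ imply $(M,Y)\in\mathcal C$; union closed if $(M,X_i)\in\mathcal C$ for all $i$ implies $(M,\bigcup_iX_i)\in\mathcal C$. For $Q\subseteq Prop$, $\mathcal C_{\sim Q}=\{(N,Y):\exists(M,X)\in\mathcal C,\ (N,Y)\rightleftharpoons_{Prop\setminus Q}(M,X)\}$. A collection $\mathcal T$ of team properties is forgetting if $\mathcal C_{\sim Q}\in\mathcal T$ for every $\mathcal C\in\mathcal T$ and every finite $Q\subseteq Prop$. *)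

(* Defs.v *)
From Stdlib Require Import List.

Section Defs.
Variable Letter : Type.

Record kmodel : Type := KModel {
  world : Type;
  acc : world -> world -> Prop;
  val : world -> Letter -> Prop
}.

Record teamModel : Type := TeamModel {
  tm_model : kmodel;
  tm_team : world tm_model -> Prop
}.

Definition teamProperty := teamModel -> Prop.

Definition bisim (P : Letter -> Prop) (M N : kmodel) (w : world M) (v : world N) : Prop :=
  exists Z : world M -> world N -> Prop,
    Z w v /\
    forall x y, Z x y ->
      (forall p, P p -> (val M x p <-> val N y p)) /\
      (forall x', acc M x x' -> exists y', acc N y y' /\ Z x' y') /\
      (forall y', acc N y y' -> exists x', acc M x x' /\ Z x' y').

Definition team_bisim (P : Letter -> Prop) (MX NY : teamModel) : Prop :=
  (forall x, tm_team MX x -> exists y, tm_team NY y /\ bisim P (tm_model MX) (tm_model NY) x y) /\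
  (forall y, tm_team NY y -> exists x, tm_team MX x /\ bisim P (tm_model MX) (tm_model NY) x y).

Definition allLetters : Letter -> Prop := fun _ => True.

Definition bisim_invariant (C : teamProperty) : Prop :=
  forall MX NY, C MX -> team_bisim allLetters MX NY -> C NY.

Definition nonempty_prop (C : teamProperty) : Prop := exists MX, C MX.

Definition downward_closed (C : teamProperty) : Prop :=
  forall (M : kmodel) (X Y : world M -> Prop),
    C (TeamModel M X) -> (forall w, Y w -> X w) -> C (TeamModel M Y).

Definition union_closed (C : teamProperty) : Prop :=
  forall (M : kmodel) (I : Type) (X : I -> world M -> Prop),
    (forall i, C (TeamModel M (X i))) ->
    C (TeamModel M (fun w => exists i, X i w)).

(* C_{~Q}, Q a finite set of letters given as a list *)
Definition forget (C : teamProperty) (Q : list Letter) : teamProperty :=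
  fun NY => exists MX, C MX /\ team_bisim (fun p => ~ In p Q) NY MX.

Definition forgetting (T : teamProperty -> Prop) : Prop :=
  forall C, T C -> forall Q : list Letter, T (forget C Q).

End Defs.

(* Main.v *)
Require Import Defs.
From Stdlib Require Import List.
From Stdlib Require Import Eqdep ClassicalEpsilon.

Section Aux.
Variable L : Type.

Lemma bisim_mono (P P' : L -> Prop) M N w v :
  (forall p, P' p -> P p) -> bisim L P M N w v -> bisim L P' M N w v.
Proof.
  intros HP [Z [Hz HZ]]. exists Z. split; [exact Hz|].
  intros x y Hxy. destruct (HZ x y Hxy) as [H1 [H2 H3]].
  split; [intros p Hp; apply H1; auto | split; auto].
Qed.

Lemma bisim_sym P M N w v : bisim L P M N w v -> bisim L P N M v w.
Proof.
  intros [Z [Hz HZ]]. exists (fun a b => Z b a). split; [exact Hz|].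
  intros x y Hxy. destruct (HZ y x Hxy) as [H1 [H2 H3]].
  split; [intros p Hp; symmetry; apply H1; auto | split; auto].
Qed.

Lemma bisim_refl P M w : bisim L P M M w w.
Proof.
  exists (fun a b => a = b). split; [reflexivity|].
  intros x y <-. split; [tauto | split; intros x' H; exists x'; auto].
Qed.

Lemma bisim_trans P M N K u v w :
  bisim L P M N u v -> bisim L P N K v w -> bisim L P M K u w.
Proof.
  intros [Z1 [Hz1 HZ1]] [Z2 [Hz2 HZ2]].
  exists (fun a c => exists b, Z1 a b /\ Z2 b c). split; [eauto|].
  intros x z [y [Hxy Hyz]].
  destruct (HZ1 x y Hxy) as [A1 [B1 C1]].
  destruct (HZ2 y z Hyz) as [A2 [B2 C2]].
  split; [intros p Hp; rewrite A1, A2; tauto|split].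
  - intros x' Hx'. destruct (B1 x' Hx') as [y' [Hy' Z1']].
    destruct (B2 y' Hy') as [z' [Hz' Z2']]. eauto.
  - intros z' Hz'. destruct (C2 z' Hz') as [y' [Hy' Z2']].
    destruct (C1 y' Hy') as [x' [Hx' Z1']]. eauto.
Qed.

Lemma tb_sym P A B : team_bisim L P A B -> team_bisim L P B A.
Proof.
  intros [H1 H2]. split.
  - intros y Hy. destruct (H2 y Hy) as [x [Hx Hb]]. exists x. split; auto. apply bisim_sym; auto.
  - intros x Hx. destruct (H1 x Hx) as [y [Hy Hb]]. exists y. split; auto. apply bisim_sym; auto.
Qed.

Lemma tb_refl P A : team_bisim L P A A.
Proof. split; intros x Hx; exists x; split; auto; apply bisim_refl. Qed.

Lemma tb_trans P A B C : team_bisim L P A B -> team_bisim L P B C -> team_bisim L P A C.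
Proof.
  intros [H1 H2] [K1 K2]. split.
  - intros x Hx. destruct (H1 x Hx) as [y [Hy Hb]]. destruct (K1 y Hy) as [z [Hz Hc]].
    exists z. split; auto. eapply bisim_trans; eauto.
  - intros z Hz. destruct (K2 z Hz) as [y [Hy Hb]]. destruct (H2 y Hy) as [x [Hx Hc]].
    exists x. split; auto. eapply bisim_trans; eauto.
Qed.

Lemma tb_mono (P P' : L -> Prop) A B :
  (forall p, P' p -> P p) -> team_bisim L P A B -> team_bisim L P' A B.
Proof.
  intros HP [H1 H2]. split.
  - intros x Hx. destruct (H1 x Hx) as [y [Hy Hb]]. exists y. split; auto. eapply bisim_mono; eauto.
  - intros x Hx. destruct (H2 x Hx) as [y [Hy Hb]]. exists y. split; auto. eapply bisim_mono; eauto.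
Qed.

Lemma forget_inv C Q : bisim_invariant L C -> bisim_invariant L (forget L C Q).
Proof.
  intros HC MX NY [K [HK Hb]] Hb2. exists K. split; auto.
  eapply tb_trans; [|exact Hb]. apply tb_sym. eapply tb_mono; [|exact Hb2]. unfold allLetters; auto.
Qed.

Lemma forget_ne C Q : nonempty_prop L C -> nonempty_prop L (forget L C Q).
Proof. intros [MX H]. exists MX. exists MX. split; auto. apply tb_refl. Qed.

Lemma forget_dc C Q : downward_closed L C -> downward_closed L (forget L C Q).
Proof.
  intros HC N Y Y' [K [HK [H1 H2]]] Hsub.
  set (P := fun p => ~ In p Q) in *.
  exists (TeamModel L (tm_model L K)
     (fun x => tm_team L K x /\ exists y, Y' y /\ bisim L P N (tm_model L K) y x)).
  split.
  - destruct K as [M X]. eapply HC; [exact HK|]. simpl. tauto.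
  - split.
    + intros y Hy. destruct (H1 y (Hsub y Hy)) as [x [Hx Hb]]. exists x. simpl. eauto.
    + intros x [Hx [y [Hy Hb]]]. eauto.
Qed.

Lemma forget_uc C Q : bisim_invariant L C -> union_closed L C -> union_closed L (forget L C Q).
Proof.
  intros HI HU N I X HX.
  set (P := fun p => ~ In p Q) in *.
  set (f := fun i => proj1_sig (constructive_indefinite_description _ (HX i))).
  assert (Hf : forall i, C (f i) /\ team_bisim L P (TeamModel L N (X i)) (f i)).
  { intro i. exact (proj2_sig (constructive_indefinite_description _ (HX i))). }
  clearbody f.
  set (S := KModel L {i : I & world L (tm_model L (f i))}
    (fun s t => exists j a b, s = existT _ j a /\ t = existT _ j b /\ acc L (tm_model L (f j)) a b)
    (fun s p => val L (tm_model L (f (projT1 s))) (projT2 s) p)).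
  assert (Hinj : forall i a, bisim L (allLetters L) (tm_model L (f i)) S a (existT _ i a)).
  { intros i a. exists (fun a s => s = existT _ i a). split; [reflexivity|].
    intros x s ->. split; [simpl; tauto|split].
    - intros x' Hx'. exists (existT _ i x'). split; auto. simpl. exists i, x, x'. auto.
    - intros t [j [a0 [b [E1 [E2 Hacc]]]]]. subst t.
      assert (i = j) by exact (f_equal (@projT1 _ _) E1). subst j.
      apply inj_pair2 in E1. subst a0. exists b. auto. }
  set (T := fun i (s : world L S) => exists a, s = existT _ i a /\ tm_team L (f i) a).
  assert (HT : forall i, C (TeamModel L S (T i))).
  { intros i. eapply HI; [exact (proj1 (Hf i))|]. split.
    - intros x Hx. exists (existT _ i x). split; [exists x; auto| apply Hinj].
    - intros s [a [-> Ha]]. exists a. split; [exact Ha|apply Hinj]. }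
  exists (TeamModel L S (fun s => exists i, T i s)). split; [apply HU; exact HT|].
  split.
  - intros y [i Hy]. destruct (proj2 (Hf i)) as [H1 H2].
    destruct (H1 y Hy) as [a [Ha Hb]]. exists (existT _ i a). split.
    + exists i, a. auto.
    + simpl in *. eapply bisim_trans; [exact Hb|]. eapply bisim_mono; [|apply Hinj]. unfold allLetters; auto.
  - intros s [i [a [-> Ha]]]. destruct (proj2 (Hf i)) as [H1 H2].
    destruct (H2 a Ha) as [y [Hy Hb]]. exists y. split; [exists i; exact Hy|].
    simpl in *. eapply bisim_trans; [exact Hb|]. eapply bisim_mono; [|apply Hinj]. unfold allLetters; auto.
Qed.

End Aux.

Theorem mainTheorem12 (Letter : Type) :
  forgetting Letter (fun C => bisim_invariant Letter C /\ nonempty_prop Letter C /\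
                              downward_closed Letter C /\ union_closed Letter C) /\
  forgetting Letter (fun C => bisim_invariant Letter C /\ nonempty_prop Letter C /\
                              downward_closed Letter C) /\
  forgetting Letter (fun C => bisim_invariant Letter C /\ nonempty_prop Letter C /\
                              union_closed Letter C).
Proof.
  split; [|split]; intros C HC Q.
  - destruct HC as [A [B [D E]]]. split; [apply forget_inv; auto|split; [apply forget_ne; auto|split; [apply forget_dc; auto|apply forget_uc; auto]]].
  - destruct HC as [A [B D]]. split; [apply forget_inv; auto|split; [apply forget_ne; auto|apply forget_dc; auto]].
  - destruct HC as [A [B E]]. split; [apply forget_inv; auto|split; [apply forget_ne; auto|apply forget_uc; auto]].
Qed.
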